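(* Let $T$ be a finite rooted tree in which every inner node has at least two children, with node set $V$ and leaf set $L$. If $X\subseteq V\setminus L$ is thin, then there exists a pair $(\pi,\sigma)$ of injective maps from $X$ to $L$ that has unique request and identifies $X$.
   Context: A set $X\subseteq V\setminus L$ of inner nodes is thin if for every $x\in X$ other than the root, the parent of $x$ does not belong to $X$, and $x$ has at least one sibling (possibly a leaf) that does not belong to $X$. A pair $(\pi,\sigma)$ of injective maps from $X$ to $L$ identifies $X$ if for each $s\in X$, $s$ is the least common ancestor of $\pi(s)$ and $\sigma(s)$ (every node is its own ancestor). For $s\in X$, a node $y$ is $s$-requested in $(\pi,\sigma)$ if $y$ lies on the path of $T$ from $\pi(s)$ to $\sigma(s)$; the pair has unique request if every node is $s$-requested for at most one $s\in X$. *)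

(* Defs.v *)
(* A finite rooted tree is given by a finite node type V,
   a root r and a parent map par : V -> V with par r = r, such that every
   node reaches the root by iterating par. *)
From mathcomp Require Import all_boot.
Set Implicit Arguments. Unset Strict Implicit. Unset Printing Implicit Defensive.

Section Tree.
Variables (V : finType) (r : V) (par : V -> V).

Definition rooted_tree : Prop :=
  par r = r /\ forall v : V, exists k : nat, iter k par v = r.

Definition anc (u v : V) : bool := [exists k : 'I_#|V|.+1, iter k par v == u].

Definition children (v : V) : {set V} := [set c | (c != r) && (par c == v)].

Definition is_leaf (v : V) : bool := children v == set0.
Definition leaves : {set V} := [set v | is_leaf v].
Definition inner_nodes : {set V} := [set v | ~~ is_leaf v].

Definition full_branching : Prop :=
  forall v : V, ~~ is_leaf v -> 1 < #|children v|.

Definition thin (X : {set V}) : Prop :=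
  X \subset inner_nodes /\
  forall x, x \in X -> x != r ->
    par x \notin X /\
    exists y : V, [/\ y != r, par y = par x, y != x & y \notin X].

Definition is_lca (s a b : V) : Prop :=
  anc s a /\ anc s b /\ forall c, anc c a -> anc c b -> anc c s.

(* y lies on the tree path from a to b: y is an ancestor of a or of b,
   and a descendant of every common ancestor of a and b (i.e. of their lca) *)
Definition on_path (y a b : V) : Prop :=
  (anc y a || anc y b) /\ forall c, anc c a -> anc c b -> anc c y.

Definition identifies (X : {set V}) (pi sigma : V -> V) : Prop :=
  forall s, s \in X -> is_lca s (pi s) (sigma s).

Definition requested (pi sigma : V -> V) (s y : V) : Prop :=
  on_path y (pi s) (sigma s).

Definition unique_request (X : {set V}) (pi sigma : V -> V) : Prop :=
  forall y s1 s2, s1 \in X -> s2 \in X ->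
    requested pi sigma s1 y -> requested pi sigma s2 y -> s1 = s2.

Definition inj_to_leaves (X : {set V}) (f : V -> V) : Prop :=
  {in X &, injective f} /\ forall x, x \in X -> f x \in leaves.

End Tree.

(* Main.v *)
Require Import Defs.
From mathcomp Require Import all_boot.
Set Implicit Arguments. Unset Strict Implicit. Unset Printing Implicit Defensive.

Lemma ancE (V : finType) (par : V -> V) u v :
  anc par u v <-> exists k, iter k par v = u.
Proof.
split.
- by case/existsP => k /eqP <-; exists k.
- case=> k <-; apply/existsP.
  have Hc := fconnect_iter par k v.
  have H1 := findex_max Hc; have H2 := iter_findex Hc.
  have Hk : findex par v (iter k par v) < #|V|.+1.
    by apply: leq_trans H1 _; apply: leqW; exact: max_card.
  by exists (Ordinal Hk); rewrite /= H2.
Qed.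

Lemma anc_refl (V : finType) (par : V -> V) v : anc par v v.
Proof. by apply/ancE; exists 0. Qed.

Lemma anc_par1 (V : finType) (par : V -> V) v : anc par (par v) v.
Proof. by apply/ancE; exists 1. Qed.

Lemma anc_trans (V : finType) (par : V -> V) a b c :
  anc par a b -> anc par b c -> anc par a c.
Proof.
move=> /ancE [i Hi] /ancE [j Hj]; apply/ancE; exists (i + j).
by rewrite iterD Hj Hi.
Qed.

Lemma anc_total (V : finType) (par : V -> V) a b v :
  anc par a v -> anc par b v -> anc par a b || anc par b a.
Proof.
move=> /ancE [i Hi] /ancE [j Hj].
case: (leqP i j) => Hij.
- apply/orP; right; apply/ancE; exists (j - i).
  by rewrite -Hi -iterD subnK.
- apply/orP; left; apply/ancE; exists (i - j).
  by rewrite -Hj -iterD subnK // ltnW.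
Qed.

Lemma anc_step (V : finType) (par : V -> V) w c :
  anc par w c -> w = c \/ anc par w (par c).
Proof.
move=> /ancE [[|k] Hk]; first by left.
by right; apply/ancE; exists k; rewrite -iterSr.
Qed.

Lemma iter_root (V : finType) (r : V) (par : V -> V) m :
  par r = r -> iter m par r = r.
Proof. by move=> Hr; elim: m => //= m ->. Qed.

Lemma cycle_root (V : finType) (r : V) (par : V -> V) a n :
  rooted_tree r par -> iter n.+1 par a = a -> a = r.
Proof.
move=> [Hr Hreach] Hc.
have Hm : forall m, iter (m * n.+1) par a = a.
  by elim=> // m IH; rewrite mulSn iterD IH Hc.
have [k Hk] := Hreach a.
have Hle : k <= k * n.+1 by rewrite leq_pmulr.
by rewrite -(Hm k) -(subnK Hle) iterD Hk iter_root.
Qed.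

Lemma anc_antisym (V : finType) (r : V) (par : V -> V) a b :
  rooted_tree r par -> anc par a b -> anc par b a -> a = b.
Proof.
move=> Ht /ancE [i Hi] /ancE [j Hj].
have E : iter (i + j) par a = a by rewrite iterD Hj.
case: i Hi E => [|i] Hi E; first by [].
have Ha := cycle_root Ht E.
by rewrite -Hj Ha iter_root //; case: Ht.
Qed.

Lemma child_ne (V : finType) (r : V) (par : V -> V) c :
  rooted_tree r par -> c != r -> par c != c.
Proof.
move=> Ht Hc; apply/eqP => E; move/eqP: Hc; apply.
by apply: (@cycle_root _ r par c 0 Ht).
Qed.

Definition goodleaf (V : finType) (r : V) (par : V -> V) (X : {set V}) v l :=
  [&& l \in leaves r par, anc par v l &
      [forall w, (anc par w l && anc par v w && (w != v)) ==> (w \notin X)]].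

Lemma goodleafP (V : finType) (r : V) (par : V -> V) (X : {set V}) v l :
  goodleaf r par X v l <->
  [/\ l \in leaves r par, anc par v l &
      forall w, anc par w l -> anc par v w -> w != v -> w \notin X].
Proof.
split.
- case/and3P=> H1 H2 /forallP H3; split=> // w A B C.
  by move/implyP: (H3 w); apply; rewrite A B C.
- case=> H1 H2 H3; apply/and3P; split=> //; apply/forallP=> w; apply/implyP.
  by case/andP=> /andP [A B] C; apply: H3.
Qed.

Lemma in_children (V : finType) (r : V) (par : V -> V) c v :
  (c \in children r par v) = (c != r) && (par c == v).
Proof. by rewrite inE. Qed.

Lemma exists_down (V : finType) (r : V) (par : V -> V) (X : {set V}) :
  rooted_tree r par -> full_branching r par -> thin r par X ->
  forall n v, #|[set w | anc par v w]| <= n -> exists l, goodleaf r par X v l.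
Proof.
move=> Ht Hf [HXi HX]; elim=> [|n IH] v Hn.
  have Hv : v \in [set w | anc par v w] by rewrite inE anc_refl.
  have : 0 < #|[set w | anc par v w]| by apply/card_gt0P; exists v.
  by rewrite leqn0 in Hn; rewrite (eqP Hn).
case Hl: (is_leaf r par v).
  exists v; apply/goodleafP; split.
  - by rewrite inE Hl.
  - exact: anc_refl.
  - by move=> w A B C; rewrite (anc_antisym Ht A B) eqxx in C.
have : 1 < #|children r par v| by apply: Hf; rewrite Hl.
case/card_gt1P=> c0 [y0 [Hc0 _ _]].
have [c [Hc HcX]] : exists c, c \in children r par v /\ c \notin X.
  case HX0: (c0 \in X); last by exists c0; rewrite HX0.
  move: Hc0; rewrite in_children => /andP [Hr0 /eqP Hp0].
  have [_ [y [Hy1 Hy2 _ Hy4]]] := HX c0 HX0 Hr0.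
  by exists y; rewrite in_children Hy1 Hy2 Hp0 eqxx.
move: (Hc); rewrite in_children => /andP [Hcr /eqP Hpc].
have Hvc : anc par v c by rewrite -Hpc anc_par1.
have [l Hgl] : exists l, goodleaf r par X c l.
  apply: IH; rewrite -ltnS; apply: leq_trans Hn; apply: proper_card.
  apply/properP; split.
    by apply/subsetP=> w; rewrite !inE => /(anc_trans Hvc).
  exists v; first by rewrite inE anc_refl.
  rewrite inE; apply/negP=> Hcv.
  have E := anc_antisym Ht Hcv Hvc.
  by move: (child_ne Ht Hcr); rewrite Hpc E eqxx.
case/goodleafP: Hgl => L1 L2 L3.
exists l; apply/goodleafP; split=> //; first exact: anc_trans Hvc L2.
move=> w A B C.
case Ewc: (w == c); first by rewrite (eqP Ewc).
case/orP: (anc_total A L2) => Hwc.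
  case: (anc_step Hwc) => [E|]; first by rewrite E eqxx in Ewc.
  by rewrite Hpc => Hwv; rewrite (anc_antisym Ht Hwv B) eqxx in C.
by apply: L3 => //; rewrite Ewc.
Qed.

Definition down (V : finType) (r : V) (par : V -> V) (X : {set V}) v :=
  odflt v [pick l | goodleaf r par X v l].

Lemma down_good (V : finType) (r : V) (par : V -> V) (X : {set V}) v :
  rooted_tree r par -> full_branching r par -> thin r par X ->
  goodleaf r par X v (down r par X v).
Proof.
move=> Ht Hf Hth; rewrite /down; case: pickP => [l Hl //|H].
have [l Hl] := exists_down Ht Hf Hth (leqnn _) (v := v).
by rewrite H in Hl.
Qed.

Definition ch1 (V : finType) (r : V) (par : V -> V) s :=
  odflt s [pick c in children r par s].
Definition ch2 (V : finType) (r : V) (par : V -> V) s :=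
  odflt s [pick c in children r par s :\ ch1 r par s].

Lemma ch_spec (V : finType) (r : V) (par : V -> V) s :
  1 < #|children r par s| ->
  [/\ ch1 r par s \in children r par s, ch2 r par s \in children r par s
    & ch1 r par s != ch2 r par s].
Proof.
case/card_gt1P=> x [y [Hx Hy Hxy]].
have H1 : ch1 r par s \in children r par s.
  by rewrite /ch1; case: pickP => [c Hc //|H]; rewrite H in Hx.
have H2 : ch2 r par s \in children r par s :\ ch1 r par s.
  rewrite /ch2; case: pickP => [c Hc //|H]; exfalso.
  case E: (x == ch1 r par s).
    by move: (H y); rewrite in_setD1 Hy -(eqP E) eq_sym Hxy.
  by move: (H x); rewrite in_setD1 Hx E.
by move: H2; rewrite in_setD1 => /andP [A B]; split => //; rewrite eq_sym.
Qed.

Lemma below_child (V : finType) (r : V) (par : V -> V) s c w l :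
  rooted_tree r par -> c \in children r par s -> anc par s w -> w != s ->
  anc par w l -> anc par c l -> anc par c w.
Proof.
move=> Ht; rewrite in_children => /andP [_ /eqP Hp] Hsw Hws Hwl Hcl.
case/orP: (anc_total Hcl Hwl) => // Hwc.
case: (anc_step Hwc) => [->|]; first exact: anc_refl.
by rewrite Hp => Hw; rewrite (anc_antisym Ht Hw Hsw) eqxx in Hws.
Qed.

Lemma sib_noanc (V : finType) (r : V) (par : V -> V) s c1 c2 :
  rooted_tree r par -> c1 \in children r par s -> c2 \in children r par s ->
  anc par c1 c2 -> c1 = c2.
Proof.
move=> Ht; rewrite !in_children => /andP [H1r /eqP H1p] /andP [_ /eqP H2p] H.
case: (anc_step H) => // Hc; exfalso.
rewrite H2p in Hc.
have E := anc_antisym Ht Hc (etrans (congr1 (fun x => anc par x c1) (esym H1p)) (anc_par1 par c1)).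
by move: (child_ne Ht H1r); rewrite H1p E eqxx.
Qed.

Lemma branch (V : finType) (r : V) (par : V -> V) (X : {set V}) s c :
  rooted_tree r par -> full_branching r par -> thin r par X ->
  s \in X -> c \in children r par s ->
  let l := down r par X c in
  [/\ l \in leaves r par, anc par s l &
   forall w, anc par w l -> anc par s w -> w != s -> w \notin X].
Proof.
move=> Ht Hf Hth Hs Hc /=.
case/goodleafP: (down_good c Ht Hf Hth) => L1 L2 L3.
move: (Hc); rewrite in_children => /andP [Hcr /eqP Hp].
have Hsc : anc par s c by rewrite -Hp anc_par1.
split=> //; first exact: anc_trans Hsc L2.
move=> w A B C.
have Hcw := below_child Ht Hc B C A L2.
case E: (w == c); last by apply: L3; rewrite ?E.
rewrite (eqP E); apply/negP => HcX.
have [HpX _] := (proj2 Hth) c HcX Hcr.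
by rewrite Hp Hs in HpX.
Qed.

Theorem lemma3p8 (V : finType) (r : V) (par : V -> V) (X : {set V}) :
  rooted_tree r par ->
  full_branching r par ->
  thin r par X ->
  exists pi sigma : V -> V,
    [/\ inj_to_leaves r par X pi, inj_to_leaves r par X sigma,
        unique_request par X pi sigma & identifies par X pi sigma].
Proof.
move=> Ht Hf Hth.
have Hin : forall s, s \in X -> 1 < #|children r par s|.
  move=> s Hs; apply: Hf.
  by move/subsetP: (proj1 Hth) => /(_ s Hs); rewrite inE.
pose pi := fun s => down r par X (ch1 r par s).
pose sg := fun s => down r par X (ch2 r par s).
have Hreq : forall s y, s \in X -> requested par pi sg s y ->
   anc par s y /\ exists c, c \in children r par s /\ anc par y (down r par X c).
  move=> s y Hs [Hy Hall].
  have [C1 C2 _] := ch_spec (Hin s Hs).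
  have [_ A1 _] := branch Ht Hf Hth Hs C1.
  have [_ A2 _] := branch Ht Hf Hth Hs C2.
  split; first exact: Hall.
  by case/orP: Hy => Hy; [exists (ch1 r par s) | exists (ch2 r par s)].
have Hone : forall y s1 s2, s1 \in X -> s2 \in X -> requested par pi sg s1 y ->
    requested par pi sg s2 y -> anc par s1 s2 -> s1 = s2.
  move=> y s1 s2 H1 H2 R1 R2 H12.
  have [_ [c [Hc Hyl]]] := Hreq _ _ H1 R1.
  have [Hs2y _] := Hreq _ _ H2 R2.
  have [_ _ B] := branch Ht Hf Hth H1 Hc.
  case E: (s2 == s1); first by rewrite (eqP E).
  by move: (B s2 (anc_trans Hs2y Hyl) H12); rewrite E H2 => /(_ isT).
have Hur : unique_request par X pi sg.
  move=> y s1 s2 H1 H2 R1 R2.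
  have [A1 _] := Hreq _ _ H1 R1; have [A2 _] := Hreq _ _ H2 R2.
  case/orP: (anc_total A1 A2) => H; first exact: Hone R1 R2 H.
  by symmetry; exact: Hone R2 R1 H.
have Rpi : forall s, requested par pi sg s (pi s).
  by move=> s; split; [rewrite anc_refl | move=> c A _].
have Rsg : forall s, requested par pi sg s (sg s).
  by move=> s; split; [rewrite anc_refl orbT | move=> c _ A].
exists pi, sg; split.
- split.
  + move=> x1 x2 H1 H2 E; apply: (Hur (pi x1) x1 x2 H1 H2 (Rpi x1)).
    by rewrite E; exact: Rpi.
  + move=> x Hx; have [C1 _ _] := ch_spec (Hin x Hx).
    by case: (branch Ht Hf Hth Hx C1).
- split.
  + move=> x1 x2 H1 H2 E; apply: (Hur (sg x1) x1 x2 H1 H2 (Rsg x1)).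
    by rewrite E; exact: Rsg.
  + move=> x Hx; have [_ C2 _] := ch_spec (Hin x Hx).
    by case: (branch Ht Hf Hth Hx C2).
- exact: Hur.
- move=> s Hs.
  have [C1 C2 Hne] := ch_spec (Hin s Hs).
  have [_ A1 _] := branch Ht Hf Hth Hs C1.
  have [_ A2 _] := branch Ht Hf Hth Hs C2.
  case/goodleafP: (down_good (ch1 r par s) Ht Hf Hth) => _ K1 _.
  case/goodleafP: (down_good (ch2 r par s) Ht Hf Hth) => _ K2 _.
  split; first exact: A1; split; first exact: A2.
  move=> c H1 H2.
  case/orP: (anc_total H1 A1) => // Hsc.
  case E: (c == s); first by rewrite (eqP E) anc_refl.
  have G1 := below_child Ht C1 Hsc (negbT E) H1 K1.
  have G2 := below_child Ht C2 Hsc (negbT E) H2 K2.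
  case/orP: (anc_total G1 G2) => H.
    by rewrite (sib_noanc Ht C1 C2 H) eqxx in Hne.
  by rewrite (sib_noanc Ht C2 C1 H) eqxx in Hne.
Qed.
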